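(* Let $D$ be a finite archimedean division semialgebra over $\mathbb{Z}_\mathrm{max}$. Then $\mathrm{ui}(D/\mathbb{Z}_\mathrm{max})<\infty$.
   Context: A (possibly noncommutative) semiring has a commutative associative addition with identity $0$ and an associative multiplication with identity $1$, satisfying both distributive laws; a division semiring is one in which every nonzero element is invertible. $\mathbb{Z}_\mathrm{max}=\mathbb{Z}\cup\{-\infty\}$ is the semifield with addition $\max$ and multiplication ordinary addition. A division semialgebra over a semifield $K$ is a division semiring $D$ with an injective homomorphism from $K$ into the center of $D$ (identify $K$ with its image); it is finite if $D$ is finitely generated as a left $K$-semimodule. For idempotent $K$, $D$ is archimedean over $K$ if for every $x\in D$ there exists $y\in K$ with $x+y=y$. The unit index is $\mathrm{ui}(D/K)=|D^\times/K^\times|$. *)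

(* Defs.v *)
From HB Require Import structures.
From mathcomp Require Import all_boot all_order all_algebra.
Set Implicit Arguments. Unset Strict Implicit. Unset Printing Implicit Defensive.
Import Order.TTheory GRing.Theory Num.Theory.
Local Open Scope ring_scope.

(* The semifield Z_max = Z ∪ {-oo}: None is -oo, Some n is the integer n.
   Addition is max, multiplication is ordinary addition. *)
Definition Zmax := option int.
Definition zmax_zero : Zmax := None.
Definition zmax_one : Zmax := Some 0.
Definition zmax_add (a b : Zmax) : Zmax :=
  match a, b with
  | None, _ => b
  | _, None => a
  | Some x, Some y => Some (Num.max x y)
  end.
Definition zmax_mul (a b : Zmax) : Zmax :=
  match a, b with
  | Some x, Some y => Some (x + y)
  | _, _ => None
  end.

Definition is_unit (D : pzSemiRingType) (x : D) : Prop :=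
  exists y : D, x * y = 1 /\ y * x = 1.

Definition division_semiring (D : pzSemiRingType) : Prop :=
  forall x : D, x <> 0 -> is_unit x.

Definition central_embedding (D : pzSemiRingType) (iota : Zmax -> D) : Prop :=
  injective iota /\
  iota zmax_zero = 0 /\ iota zmax_one = 1 /\
  (forall a b, iota (zmax_add a b) = iota a + iota b) /\
  (forall a b, iota (zmax_mul a b) = iota a * iota b) /\
  (forall a (x : D), iota a * x = x * iota a).

Definition finite_over (D : pzSemiRingType) (iota : Zmax -> D) : Prop :=
  exists gens : seq D, forall x : D,
    exists c : 'I_(size gens) -> Zmax,
      x = \sum_(i < size gens) iota (c i) * gens`_i.

Definition archimedean_over (D : pzSemiRingType) (iota : Zmax -> D) : Prop :=
  forall x : D, exists y : Zmax, x + iota y = iota y.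

Definition same_coset (D : pzSemiRingType) (iota : Zmax -> D) (u v : D) : Prop :=
  exists k : Zmax, k <> zmax_zero /\ u = v * iota k.

(* ui(D/K) = |D^x / K^x| is finite: finitely many cosets of K^x in D^x. *)
Definition finite_unit_index (D : pzSemiRingType) (iota : Zmax -> D) : Prop :=
  exists reps : seq D,
    (forall v, v \in reps -> is_unit v) /\
    (forall u : D, is_unit u -> exists2 v, v \in reps & same_coset iota u v).

(* Main.v *)
Require Import Defs.
From mathcomp Require Import all_boot all_order all_algebra zify.
From Stdlib Require Import ClassicalEpsilon.
Import Order.TTheory GRing.Theory Num.Theory.
Local Open Scope ring_scope.

Definition dle (D : pzSemiRingType) (x y : D) := x + y = y.
Arguments dle {D}.

Section G.
Context {D : pzSemiRingType} (hid : forall x : D, x + x = x).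
Lemma dle_refl (x : D) : dle x x. Proof. by rewrite /dle hid. Qed.
Lemma dle_trans {x y z : D} : dle x y -> dle y z -> dle x z.
Proof. rewrite /dle => h1 h2. by rewrite -h2 addrA h1. Qed.
Lemma dle_anti {x y : D} : dle x y -> dle y x -> x = y.
Proof. rewrite /dle => h1 h2. by rewrite -h1 addrC. Qed.
Lemma dle_addl (x y : D) : dle x (x + y).
Proof. by rewrite /dle addrA hid. Qed.
Lemma dle_addr (x y : D) : dle y (x + y).
Proof. by rewrite /dle addrC -addrA hid. Qed.
Lemma dle_join {a b c : D} : dle a c -> dle b c -> dle (a + b) c.
Proof. rewrite /dle => h1 h2. by rewrite -addrA h2 h1. Qed.
Lemma dle0 (x : D) : dle 0 x. Proof. by rewrite /dle add0r. Qed.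
Lemma dle_mull (z : D) {x y : D} : dle x y -> dle (z * x) (z * y).
Proof. rewrite /dle => h. by rewrite -mulrDr h. Qed.
Lemma dle_mulr (z : D) {x y : D} : dle x y -> dle (x * z) (y * z).
Proof. rewrite /dle => h. by rewrite -mulrDl h. Qed.
Lemma dle_add {a b c d : D} : dle a c -> dle b d -> dle (a + b) (c + d).
Proof.
move=> h1 h2; apply: dle_join.
  by apply: dle_trans h1 _; apply: dle_addl.
by apply: dle_trans h2 _; apply: dle_addr.
Qed.
Lemma dle_sum n (F G : 'I_n -> D) : (forall i, dle (F i) (G i)) ->
  dle (\sum_i F i) (\sum_i G i).
Proof.
move=> h; apply: (big_ind2 (fun a b => dle a b)).
- by rewrite /dle addr0.
- by move=> ? ? ? ? ? ?; apply: dle_add.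
- by move=> i _; apply: h.
Qed.
Lemma dle_sum_ub n (F : 'I_n -> D) (u : D) : (forall i, dle (F i) u) ->
  dle (\sum_i F i) u.
Proof.
move=> h; apply: (big_ind (fun a => dle a u)).
- exact: dle0.
- by move=> ? ? ? ?; apply: dle_join.
- by move=> i _; apply: h.
Qed.
Lemma dle_term n (F : 'I_n -> D) i : dle (F i) (\sum_i F i).
Proof. rewrite (bigD1 i) //=; exact: dle_addl. Qed.
End G.
Section I.
Context {D : pzSemiRingType} {iota : Zmax -> D} (hemb : central_embedding iota)
  (harch : archimedean_over iota).
Let inj : injective iota := hemb.1.
Let i0 : iota None = 0 := hemb.2.1.
Let i1 : iota (Some 0) = 1 := hemb.2.2.1.
Let iadd := hemb.2.2.2.1.
Let imul := hemb.2.2.2.2.1.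
Let icom := hemb.2.2.2.2.2.

Lemma iS_mul a b : iota (Some a) * iota (Some b) = iota (Some (a + b)).
Proof. by rewrite -imul. Qed.
Lemma iS_add a b : iota (Some a) + iota (Some b) = iota (Some (Num.max a b)).
Proof. by rewrite -iadd. Qed.
Lemma idem (x : D) : x + x = x.
Proof.
have h : (1 : D) + 1 = 1 by rewrite -i1 iS_add maxxx.
by rewrite -{1 2}(mulr1 x) -mulrDr h mulr1.
Qed.
Lemma dle_iota a b : dle (iota (Some a)) (iota (Some b)) <-> (a <= b).
Proof.
rewrite /dle iS_add; split.
  by move/inj => [] /max_idPr.
by move/max_idPr => ->.
Qed.
Lemma one_neq0 : (1 : D) <> 0.
Proof. by rewrite -i1 -i0 => /inj. Qed.
Lemma unit_neq0 {u : D} : is_unit u -> u <> 0.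
Proof. move=> [v [h _]] u0; apply: one_neq0; by rewrite -h u0 mul0r. Qed.
Lemma nonzero_upper {x : D} : x <> 0 -> exists W, dle x (iota (Some W)).
Proof.
move=> x0; have [[W|] h] := harch x; first by exists W.
by exfalso; apply: x0; move: h; rewrite i0 addr0.
Qed.
Lemma unit_bounds (g : D) : is_unit g ->
  exists v W, dle (iota (Some v)) g /\ dle g (iota (Some W)).
Proof.
move=> hg; have [W hW] := nonzero_upper (unit_neq0 hg).
have [h [gh hg']] := hg.
have hh : is_unit h by exists g.
have [m hm] := nonzero_upper (unit_neq0 hh).
exists (- m), W; split => //.
have : dle 1 (g * iota (Some m)) by rewrite -gh; apply: dle_mull.
move/(dle_mull (iota (Some (- m)))).
by rewrite mulr1 mulrA (icom _ g) -mulrA iS_mul addNr i1 mulr1.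
Qed.
End I.

Lemma fin_bound n (f : 'I_n -> int) : exists B : nat, forall i, f i <= B%:Z.
Proof.
exists (\max_i `|f i|%N) => i.
apply: le_trans (ler_norm (f i)) _.
rewrite -abszE lez_nat. exact: leq_bigmax.
Qed.

Definition dec (B : nat) (k : nat) : Zmax :=
  if k is k'.+1 then Some (k'%:Z - B%:Z) else None.

Lemma dec_none B : dec B (@ord0 (B + B).+1) = None.
Proof. by []. Qed.

Lemma dec_some (B : nat) (k : int) : - B%:Z <= k -> k <= B%:Z ->
  exists d : 'I_((B + B).+2), dec B d = Some k.
Proof.
move=> h1 h2.
have h : ((absz (k + B%:Z)%R).+1 < (B + B).+2)%N by lia.
exists (Ordinal h); rewrite /dec /=; congr Some; lia.
Qed.

Theorem mainTheorem14 (D : pzSemiRingType) (iota : Zmax -> D)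
  (hdiv : division_semiring D)
  (hemb : central_embedding iota)
  (hfin : finite_over iota)
  (harch : archimedean_over iota) :
  finite_unit_index iota.
Proof.
have idm := idem hemb.
have i0 : iota None = 0 := hemb.2.1.
have i1 : iota (Some 0) = 1 := hemb.2.2.1.
have icom : forall (a : Zmax) (x : D), iota a * x = x * iota a := hemb.2.2.2.2.2.
have [gens hgens] := hfin.
set n := size gens in hgens.
have hb : forall i : 'I_n, exists p : int * int,
   (gens`_i = 0 /\ p = (0,0)) \/
   (dle (iota (Some p.1)) gens`_i /\ dle gens`_i (iota (Some p.2))).
  move=> i; case: (classic (gens`_i = 0)) => [z|nz].
    by exists (0,0); left.
  have [v [W h]] := unit_bounds hemb harch _ (hdiv _ nz).
  by exists (v, W); right.
have [p hp] := fin_all_exists hb.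
have [S0 hS0] := fin_bound _ (fun i => (p i).2 - (p i).1).
set S : int := S0%:Z.
have [B hB] := fin_bound _ (fun i => `|(p i).1| + `|(p i).2| + `|S|).
have bnd : forall u : D, is_unit u -> exists a : int,
    dle (iota (Some a)) u /\ dle u (iota (Some (a + S))).
  move=> u hu.
  pose P (t : D) := t = 0 \/ exists a : int,
    dle (iota (Some a)) t /\ dle t (iota (Some (a + S))).
  have [c hc] := hgens u.
  have : P u.
    rewrite hc; apply: big_ind.
    - by left.
    - move=> x y [->|[a1 [l1 u1]]]; first by rewrite add0r.
      move=> [->|[a2 [l2 u2]]]; first by rewrite addr0; right; exists a1.
      right; exists (Num.max a1 a2); split.
        by rewrite -iS_add //; apply: dle_add.
      apply: (dle_trans (dle_add idm u1 u2)).
      rewrite iS_add //; apply/dle_iota => //; lia.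
    - move=> i _; case: (c i) => [k|]; last by left; rewrite i0 mul0r.
      case: (hp i) => [[-> _]|[l1 u1]]; first by left; rewrite mulr0.
      right; exists (k + (p i).1); split.
        by rewrite -iS_mul //; apply: dle_mull.
      apply: (dle_trans (dle_mull _ u1)).
      rewrite iS_mul //; apply/dle_iota => //.
      have := hS0 i; rewrite /S /=; lia.
  case=> [u0|//]; exfalso; have := unit_neq0 hemb hu; by [] || (move=> h; apply: h; exact: u0).
pose nrm (x : D) : D := if excluded_middle_informative (is_unit x) then x else 1.
pose N := (B + B).+2.
pose val (F : {ffun 'I_n -> 'I_N}) : D := \sum_(i < n) iota (dec B (F i)) * gens`_i.
exists [seq nrm (val F) | F <- enum {ffun 'I_n -> 'I_N}]; split.
  move=> v /mapP [F _ ->]; rewrite /nrm.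
  destruct (excluded_middle_informative _) as [h|h]; first done.
  by exists 1; rewrite mulr1.
move=> u hu.
have [a [la ua]] := bnd u hu.
set u' := u * iota (Some (- a)).
have hu' : is_unit u'.
  have [h [uh hu0]] := hu.
  exists (iota (Some a) * h); split.
    by rewrite /u' -mulrA (mulrA (iota _)) iS_mul // addNr i1 mul1r uh.
  by rewrite /u' mulrA -(mulrA _ h) hu0 mulr1 iS_mul // addrN i1.
have l1 : dle 1 u'.
  rewrite -i1 -(addrN a) -iS_mul //; exact: dle_mulr.
have u1 : dle u' (iota (Some S)).
  apply: (dle_trans (dle_mulr (iota (Some (-a))) ua)).
  rewrite iS_mul // addrAC addrN add0r; exact: (dle_refl idm).
have [c hc] := hgens u'.
have hd : forall i : 'I_n, exists d : 'I_N,
    dle (iota (c i) * gens`_i) (iota (dec B d) * gens`_i) /\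
    dle (iota (dec B d) * gens`_i) u'.
  move=> i.
  have tle : dle (iota (c i) * gens`_i) u'.
    rewrite hc; exact: (dle_term idm _ (fun j => iota (c j) * gens`_j) i).
  have z0 : dle 0 u' := dle0 u'.
  case: (hp i) => [[g0 _]|[lg ug]].
    by exists ord0; rewrite g0 !mulr0; split => //; exact: (dle_refl idm).
  case hci: (c i) => [k|]; last first.
    by exists ord0; rewrite /= i0 !mul0r; split => //; exact: (dle_refl idm).
  have kv : k + (p i).1 <= S.
    apply/(dle_iota hemb); rewrite -iS_mul //.
    apply: (dle_trans (dle_mull _ lg)); rewrite -hci; exact: dle_trans tle u1.
  have hBi := hB i.
  have [hkW | hkW] := lerP k (- (p i).2).
  - have b1 : - B%:Z <= - (p i).2 by lia.
    have b2 : - (p i).2 <= B%:Z by lia.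
    have [d hdd] := dec_some _ _ b1 b2.
    exists d; rewrite hdd; split.
      by apply: dle_mulr; apply/(dle_iota hemb).
    apply: (dle_trans (dle_mull _ ug)); rewrite iS_mul // addNr i1; exact: l1.
  - have b1 : - B%:Z <= k by lia.
    have b2 : k <= B%:Z by rewrite /S in kv hBi; lia.
    have [d hdd] := dec_some _ _ b1 b2.
    exists d; rewrite hdd -hci; split; [exact: (dle_refl idm) | exact: tle].
have [f hf] := fin_all_exists hd.
pose F : {ffun 'I_n -> 'I_N} := [ffun i => f i].
have hval : val F = u'.
  apply: dle_anti.
  - rewrite /val; apply: dle_sum_ub => i; rewrite ffunE; exact: (hf i).2.
  - rewrite {1}hc /val; apply: (dle_sum idm) => i; rewrite ffunE; exact: (hf i).1.
exists u'.
  apply/mapP; exists F; first by rewrite mem_enum.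
  rewrite /nrm hval; destruct (excluded_middle_informative _) as [h|nh]; first done.
  by exfalso; apply: nh.
exists (Some a); split => //.
by rewrite /u' -mulrA iS_mul // addNr i1 mulr1.
Qed.
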